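(* For every instance of continuous BGT, every schedule $S$, and every nonempty subset $V'\subseteq V$ of the points, $\mathrm{MH}(S)\ge h_{\min}(V')\cdot \mathrm{MST}(V')$.
   Context: Continuous BGT: bamboos $b_1,\dots,b_n$ located at points $V=\{v_1,\dots,v_n\}$, growth rates $h_1\ge\dots\ge h_n>0$, initial heights $0$; symmetric travel times $t_{i,j}>0$ ($i\ne j$) satisfying the triangle inequality. A robot starts at $v_1$ at time $0$, moves between points taking time $t_{i,j}$ from $v_i$ to $v_j$, and cuts the bamboo at each point it is at, instantaneously, to height $0$. Height of $b_i$ at time $t$ = $h_i$ times the time since its last cut (or since $0$). $\mathrm{MH}(S)$ = supremum of heights over all times. For $V'\subseteq V$, $h_{\min}(V')$ is the minimum growth rate of a bamboo located in $V'$, and $\mathrm{MST}(V')$ is the minimum total weight of a spanning tree on $V'$ with edge weights $t_{i,j}$ ($0$ if $|V'|=1$). *)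

(* Defs.v *)
From HB Require Import structures.
From mathcomp Require Import all_boot all_order all_algebra.
Set Implicit Arguments. Unset Strict Implicit. Unset Printing Implicit Defensive.
Import Order.TTheory GRing.Theory Num.Theory.
Local Open Scope ring_scope.

Section BGT.
Variable R : realFieldType.
Variable n : nat.
(* points v_1, ..., v_{n+1} are the elements of 'I_n.+1; v_1 = ord0 *)
Notation P := 'I_n.+1.

Definition dist (t : P -> P -> R) (i j : P) : R := if i == j then 0 else t i j.

(* a schedule: the robot is at point s k at time T k (where it cuts);
   it starts at v_1 at time 0, consecutive visits respect travel times
   (waiting is allowed), and the schedule runs forever. *)
Definition schedule (t : P -> P -> R) (s : nat -> P) (T : nat -> R) : Prop :=
  [/\ s 0%N = ord0, T 0%N = 0,
      (forall k, T k + dist t (s k) (s k.+1) <= T k.+1)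
    & (forall x : R, exists k, x <= T k)].

Definition last_cut (s : nat -> P) (T : nat -> R) (i : P) (tm L : R) : Prop :=
  [/\ L = 0 \/ (exists k, s k = i /\ T k = L), L <= tm
    & forall k, s k = i -> T k <= tm -> T k <= L].

(* height of bamboo i at time tm equals h i * (tm - L), L the last cut time *)
Definition MH_le (h : P -> R) (s : nat -> P) (T : nat -> R) (M : R) : Prop :=
  forall (i : P) (tm L : R), 0 <= tm -> last_cut s T i tm L -> h i * (tm - L) <= M.

(* edges of a graph on a subset V' : ordered pairs (i, j) with i < j *)
Definition adj (E : {set P * P}) : rel P :=
  fun x y => ((x, y) \in E) || ((y, x) \in E).

Definition spanning_tree (V' : {set P}) (E : {set P * P}) : bool :=
  [&& E \subset [set e : P * P | [&& (e.1 < e.2)%N, e.1 \in V' & e.2 \in V']],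
      #|E| == #|V'|.-1
    & [forall x in V', forall y in V', connect (adj E) x y]].

Definition weight (t : P -> P -> R) (E : {set P * P}) : R :=
  \sum_(e in E) t e.1 e.2.

Definition MST (t : P -> P -> R) (V' : {set P}) : R :=
  let E0 := odflt set0 [pick E | spanning_tree V' E] in
  \big[Order.min/weight t E0]_(E | spanning_tree V' E) weight t E.

Definition hmin (h : P -> R) (V' : {set P}) : R :=
  let i0 := odflt ord0 [pick i in V'] in
  \big[Order.min/h i0]_(i in V') h i.

End BGT.

(* Main.v *)
Require Import Defs.
From HB Require Import structures.
From mathcomp Require Import all_boot all_order all_algebra.
From mathcomp Require Import lra.
Set Implicit Arguments. Unset Strict Implicit. Unset Printing Implicit Defensive.
Import Order.TTheory GRing.Theory Num.Theory.
Local Open Scope ring_scope.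

Section Aux.
Variable R : realFieldType.
Variable n : nat.
Notation P := 'I_n.+1.
Variable t : P -> P -> R.
Hypothesis t_pos : forall i j, i != j -> 0 < t i j.
Hypothesis t_sym : forall i j, t i j = t j i.
Hypothesis t_tri : forall i j k, i != j -> j != k -> i != k -> t i k <= t i j + t j k.

Lemma dist_ge0 i j : 0 <= dist t i j.
Proof. rewrite /dist; have [//|ne] := eqVneq i j; rewrite le_eqVlt t_pos ?orbT //. Qed.

Lemma dist_tri i j k : dist t i k <= dist t i j + dist t j k.
Proof.
have [->|nij] := eqVneq i j; first by rewrite {2}/dist eqxx add0r.
have [->|njk] := eqVneq j k; first by rewrite {3}/dist eqxx addr0.
have [->|nik] := eqVneq i k; first by rewrite /dist eqxx addr_ge0 // ?dist_ge0.
by rewrite /dist (negbTE nij) (negbTE njk) (negbTE nik) t_tri.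
Qed.

Lemma adj_sym (E : {set P * P}) : symmetric (adj E).
Proof. by move=> x y; rewrite /adj orbC. Qed.

Definition edge (p q : P) : P * P := if (p < q)%N then (p, q) else (q, p).

Lemma tree_single (x : P) : spanning_tree [set x] set0.
Proof.
apply/and3P; split; first exact: sub0set.
  by rewrite cards0 cards1.
by apply/forall_inP => y /set1P -> ; apply/forall_inP => z /set1P ->; exact: connect0.
Qed.

Lemma weight_add (E : {set P * P}) p q : p != q -> (forall e, e \in E -> (e.1 != q) && (e.2 != q)) ->
  weight t (edge p q |: E) = weight t E + t p q.
Proof.
move=> npq HE.
have nE : edge p q \notin E.
  apply/negP => /HE; rewrite /edge; case: ifP => /= _ /andP [].
    by rewrite eqxx.
  by move=> /negP.
rewrite /weight (big_setU1 _ nE) /= addrC; congr (_ + _).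
by rewrite /edge; case: ifP => //= _; rewrite t_sym.
Qed.

Lemma tree_add (U : {set P}) (E : {set P * P}) p q : spanning_tree U E -> p \in U -> q \notin U ->
  spanning_tree (q |: U) (edge p q |: E).
Proof.
move=> /and3P [sub cardE conn] pU qU.
have npq : p != q by apply: contraNneq qU => <-.
have HE : forall e, e \in E -> (e.1 \in U) && (e.2 \in U).
  move=> e /(subsetP sub); rewrite inE => /and3P [_ -> ->] //.
have nE : edge p q \notin E.
  apply/negP => /HE; rewrite /edge; case: ifP => /= _ /andP [a b]; [by rewrite b in qU | by rewrite a in qU].
apply/and3P; split.
- apply/subsetP => e; rewrite !inE => /orP [/eqP ->|eE].
    rewrite /edge; case: ifP => /= lt; rewrite eqxx pU ?orbT ?andbT //.
    rewrite ltn_neqAle leqNgt lt andbT.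
    by apply: contra npq => /eqP/val_inj ->.
  move: (subsetP sub e eE); rewrite inE => /and3P [-> a b].
  by rewrite a b !orbT.
- have U0 : (0 < #|U|)%N by apply/card_gt0P; exists p.
  rewrite (cardsU1 _ E) nE (cardsU1 q U) qU /= (eqP cardE).
  by rewrite add1n prednK.
- have sube : subrel (adj E) (connect (adj (edge p q |: E))).
    by move=> x y /orP [] H; apply: connect1; rewrite /adj !inE H ?orbT.
  have toP : forall x, x \in q |: U -> connect (adj (edge p q |: E)) x p.
    move=> x; rewrite !inE => /orP [/eqP ->|xU].
      apply: connect1; rewrite /adj !inE /edge; case: ifP => _; by rewrite eqxx ?orbT.
    apply: (connect_sub sube).
    by move: conn => /forall_inP /(_ x xU) /forall_inP /(_ p pU).
  have csym := sym_connect_sym (adj_sym (edge p q |: E)).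
  apply/forall_inP => x xU; apply/forall_inP => y yU.
  apply: connect_trans (toP x xU) _.
  by rewrite csym; apply: toP.
Qed.

End Aux.

Section Sched.
Variable R : realFieldType.
Variable n : nat.
Notation P := 'I_n.+1.
Variable t : P -> P -> R.
Hypothesis t_pos : forall i j, i != j -> 0 < t i j.
Hypothesis t_sym : forall i j, t i j = t j i.
Hypothesis t_tri : forall i j k, i != j -> j != k -> i != k -> t i k <= t i j + t j k.
Variables (s : nat -> P) (T : nat -> R).
Hypothesis S_sched : schedule t s T.

Lemma T_step k : T k + dist t (s k) (s k.+1) <= T k.+1.
Proof. by case: S_sched. Qed.

Lemma T_mono k k' : (k <= k')%N -> T k <= T k'.
Proof.
move=> /subnKC <-; elim: (k' - k)%N => [|d IH]; first by rewrite addn0.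
rewrite addnS; apply: le_trans IH _; apply: le_trans (T_step _).
by rewrite lerDl dist_ge0.
Qed.

Arguments T_mono {k k'}.

Lemma T_ge0 k : 0 <= T k.
Proof. by case: S_sched => _ T0 _ _; rewrite -T0 T_mono. Qed.

Lemma K_exists tm : exists K, forall k, (K <= k)%N -> tm < T k.
Proof.
case: S_sched => _ _ _ /(_ (tm + 1)) [K HK]; exists K => k Kk.
apply: (lt_le_trans _ (T_mono Kk)); apply: (lt_le_trans _ HK); by rewrite ltrDl.
Qed.

Variable h : P -> R.
Variable M : R.
Hypothesis HM : MH_le h s T M.

Lemma visit (c tm : R) (K : nat) (i : P) : 0 < c -> c <= h i -> 0 <= tm -> M < c * tm ->
  (forall k, (K <= k)%N -> tm < T k) ->
  exists k : 'I_K, [&& s k == i, T k <= tm & c * (tm - T k) <= M].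
Proof.
move=> c0 chi tm0 Mc HK.
have notK : forall k, s k = i -> T k <= tm -> (k < K)%N.
  by move=> k _ Tk; rewrite ltnNge; apply/negP => /HK; rewrite ltNge Tk.
case: (pickP (fun k : 'I_K => (s k == i) && (T k <= tm))) => [k0 Pk0|none].
  case: (@arg_maxnP _ k0 (fun k : 'I_K => (s k == i) && (T k <= tm)) (fun k : 'I_K => val k) Pk0) => km /andP [/eqP ski Tk] Hmax.
  exists km; rewrite ski eqxx Tk /=.
  have lc : last_cut s T i tm (T km).
    split; [by right; exists km | by [] |].
    move=> k ski' Tk'; have kK := notK k ski' Tk'.
    apply: T_mono; apply: (Hmax (Ordinal kK)); by rewrite /= ski' eqxx Tk'.
  have := HM tm0 lc; apply: le_trans.
  by apply: ler_wpM2r => //; rewrite subr_ge0.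
exfalso.
have lc : last_cut s T i tm 0.
  split; [by left | by [] |].
  move=> k ski Tk; have kK := notK k ski Tk.
  by move: (none (Ordinal kK)); rewrite /= ski eqxx Tk.
have := HM tm0 lc; rewrite subr0 => H.
have : c * tm <= M by apply: le_trans H; apply: ler_wpM2r.
by rewrite leNgt Mc.
Qed.

Variable V' : {set P}.
Variable a : nat.
Hypothesis saV : s a \in V'.

Definition U (m : nat) : {set P} := [set x in V' | [exists k : 'I_m.+1, s (a + k)%N == x]].

Lemma U0 : U 0 = [set s a].
Proof.
apply/setP => x; rewrite !inE; apply/andP/eqP.
  by case=> _ /existsP [k]; rewrite (ord1 k) addn0 => /eqP.
by move=> ->; split => //; apply/existsP; exists ord0; rewrite addn0.
Qed.

Lemma US m : U m.+1 = if s (a + m.+1)%N \in V' then s (a + m.+1)%N |: U m else U m.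
Proof.
have E x : [exists k : 'I_m.+2, s (a + k)%N == x] =
    (s (a + m.+1)%N == x) || [exists k : 'I_m.+1, s (a + k)%N == x].
  apply/existsP/orP.
    case=> k; have [km|] := ltnP k m.+1.
      by move=> H; right; apply/existsP; exists (Ordinal km).
    move=> km; have -> : (k : nat) = m.+1 by apply/eqP; rewrite eqn_leq km -ltnS ltn_ord.
    by left.
  case=> [H|/existsP [k H]]; first by exists ord_max.
  by exists (widen_ord (leqnSn _) k).
apply/setP => x; rewrite !inE E andb_orr.
case: ifP => sV; rewrite !inE.
  by case: (eqVneq x (s (a + m.+1)%N)) => [->|ne]; rewrite ?sV ?andbF.
case: (eqVneq (s (a + m.+1)%N) x) => [<-|ne]; first by rewrite sV.
by rewrite andbF.
Qed.

Lemma walk_tree m : exists (E : {set P * P}) p,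
  [/\ spanning_tree (U m) E, p \in U m &
      weight t E + dist t p (s (a + m)%N) <= T (a + m)%N - T a].
Proof.
elim: m => [|m [E [p [st pU Hw]]]].
  exists set0, (s a); rewrite U0 addn0 tree_single set11; split => //.
  by rewrite /weight big_set0 /dist eqxx add0r subrr.
set q := s (a + m.+1)%N.
have stepm : dist t (s (a + m)%N) q <= T (a + m.+1)%N - T (a + m)%N.
  have := T_step (a + m)%N; rewrite /q addnS => H; lra.
have Hpq : weight t E + dist t p q <= T (a + m.+1)%N - T a.
  have := @dist_tri _ _ _ t_pos t_tri p (s (a + m)%N) q; lra.
have distqq : dist t q q = 0 by rewrite /dist eqxx.
rewrite US; case qV: (q \in V'); last first.
  by exists E, p; split.
case qU: (q \in U m).
  exists E, q; have -> : q |: U m = U m by apply/setP => x; rewrite in_setU1; case: eqP => [->|//]; by rewrite qU.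
  split => //.
  have := @dist_ge0 _ _ _ t_pos p q; lra.
have npq : p != q by apply/negP => /eqP eq; rewrite -eq pU in qU.
have HE : forall e, e \in E -> (e.1 != q) && (e.2 != q).
  move: st => /and3P [sub _ _] e /(subsetP sub); rewrite inE => /and3P [_ a1 a2].
  by apply/andP; split; apply/negP => /eqP eq; [rewrite -eq a1 in qU | rewrite -eq a2 in qU].
exists (edge p q |: E), q; split.
- by apply: tree_add => //; rewrite qU.
- by rewrite setU11.
- rewrite weight_add // distqq addr0.
  move: Hpq; rewrite /dist (negbTE npq); lra.
Qed.

End Sched.

Theorem lemma4 (R : realFieldType) (n : nat)
  (h : 'I_n.+1 -> R) (t : 'I_n.+1 -> 'I_n.+1 -> R)
  (h_pos : forall i, 0 < h i)
  (h_noninc : forall i j : 'I_n.+1, (i <= j)%N -> h j <= h i)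
  (t_pos : forall i j, i != j -> 0 < t i j)
  (t_sym : forall i j, t i j = t j i)
  (t_tri : forall i j k, i != j -> j != k -> i != k -> t i k <= t i j + t j k)
  (s : nat -> 'I_n.+1) (T : nat -> R)
  (S_sched : schedule t s T)
  (V' : {set 'I_n.+1}) (V'_ne : V' != set0)
  (M : R) (HM : MH_le h s T M) :
  hmin h V' * MST t V' <= M.
Proof.
set c := hmin h V'.
have [i0 i0V] : exists i0, i0 \in V' by apply/set0Pn.
have c_le : forall i, i \in V' -> c <= h i.
  by move=> i iV; rewrite /c /hmin (bigD1 i) //= ge_min lexx.
have c_pos : 0 < c.
  by rewrite /c /hmin; apply: (big_ind (fun x => 0 < x)) => // x y x0 y0; rewrite lt_min x0 y0.
set tm := `|M| / c + 1.
have ctm : c * tm = `|M| + c.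
  rewrite /tm mulrDr mulr1 mulrC -mulrA mulVf ?mulr1 //; by rewrite gt_eqF.
have tm0 : 0 <= tm by rewrite /tm addr_ge0 // divr_ge0 // ltW.
have Mc : M < c * tm.
  rewrite ctm; have := ler_norm M; lra.
have [K HK] := K_exists t_pos S_sched tm.
pose Q i (k : nat) := [&& s k == i, T k <= tm & c * (tm - T k) <= M].
have vis : forall i, i \in V' -> exists k : 'I_K, Q i k.
  move=> i iV; exact: (visit t_pos S_sched HM c_pos (c_le i iV) tm0 Mc HK).
pose f i := if [pick k : 'I_K | Q i k] is Some k then val k else 0%N.
have fP : forall i, i \in V' -> Q i (f i).
  move=> i iV; rewrite /f; case: pickP => [k //|none]; exfalso.
  by case: (vis i iV) => k; rewrite none.
case: (@arg_minnP _ i0 (fun i => i \in V') f i0V) => ilo iloV Hlo.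
case: (@arg_maxnP _ i0 (fun i => i \in V') f i0V) => ihi ihiV Hhi.
set a := f ilo; set b := f ihi.
have /and3P [/eqP sa _ Ma] := fP ilo iloV.
have /and3P [_ Tb _] := fP ihi ihiV.
have saV : s a \in V' by rewrite sa.
have ab : (a <= b)%N by apply: Hlo.
have [E [p [st pU Hw]]] := walk_tree t_pos t_sym t_tri S_sched saV (b - a).
rewrite subnKC // in Hw.
have UV : U s V' a (b - a) = V'.
  apply/setP => x; rewrite inE; apply/andP/idP => [[] //|xV]; split => //.
  have /and3P [/eqP sx _ _] := fP x xV.
  have ax : (a <= f x)%N by apply: Hlo.
  have xb : (f x - a < (b - a).+1)%N by rewrite ltnS leq_sub2r //; exact: Hhi.
  apply/existsP; exists (Ordinal xb); by rewrite /= subnKC // sx.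
rewrite UV in st.
have MSTle : MST t V' <= weight t E.
  by rewrite /MST (bigD1 E) //= ge_min lexx.
have wle : weight t E <= tm - T a.
  have := @dist_ge0 _ _ _ t_pos p (s b); lra.
apply: le_trans Ma; apply: le_trans (ler_wpM2l (ltW c_pos) MSTle) _.
exact: (ler_wpM2l (ltW c_pos) wle).
Qed.
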